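(* Let $\Omega\subset\{1,\dots,N\}$ have cardinality $n$, let $0<\epsilon<1$, and let $b\in\mathbb{R}^N$ and $c\in\mathbb{R}^{2N-1}$ be random vectors with independent Bernoulli $\pm1$ entries. Let $\mu$ be the coherence of the random partial circulant matrix $\frac{1}{\sqrt n}S^b_\Omega\in\mathbb{R}^{n\times N}$, or of the random partial Toeplitz matrix $\frac1{\sqrt n}T^c_\Omega\in\mathbb{R}^{n\times N}$. Then with probability at least $1-\epsilon$, $$\mu\le 4\,\frac{\log(2N^2/\epsilon)}{\sqrt n}.$$
   Context: For $b=(b_0,\dots,b_{N-1})\in\mathbb{R}^N$ the circulant matrix $S^b\in\mathbb{R}^{N\times N}$ has entries $S^b_{i,j}=b_{(j-i)\bmod N}$, $i,j=1,\dots,N$. For $c=(c_{-N+1},\dots,c_{N-1})\in\mathbb{R}^{2N-1}$ the Toeplitz matrix $T^c\in\mathbb{R}^{N\times N}$ has entries $T^c_{i,j}=c_{j-i}$. $S^b_\Omega$ (resp. $T^c_\Omega$) is the submatrix consisting of the rows indexed by $\Omega$. A Bernoulli $\pm1$ variable takes values $\pm1$ with probability $1/2$ each. The coherence of a matrix $A$ with columns $a_1,\dots,a_N$ is $\mu=\max_{\rho\neq\lambda}|\langle a_\rho,a_\lambda\rangle|$. *)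

(* Defs.v *)
From HB Require Import structures.
From mathcomp Require Import all_boot all_order all_algebra.
From mathcomp Require Import reals exp.
Set Implicit Arguments. Unset Strict Implicit. Unset Printing Implicit Defensive.
Import Order.TTheory GRing.Theory Num.Theory.
Local Open Scope ring_scope.

Definition pm1 {R : pzRingType} (x : bool) : R := if x then 1 else -1.

Definition circulant {R : pzRingType} (N : nat) (b : 'I_N -> R) : 'M[R]_N :=
  \matrix_(i, j) match insub ((j + N - i) %% N)%N with
                 | Some k => b k | None => 0 end.

(* Toeplitz matrix T^c with c = (c_{-N+1},...,c_{N-1}) stored as
   c' : 'I_(2N-1) -> R, c_k = c' (k + N - 1): T^c_{i,j} = c_{j-i}. *)
Definition toeplitz {R : pzRingType} (N : nat) (c : 'I_(2 * N - 1) -> R) : 'M[R]_N :=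
  \matrix_(i, j) match insub (j + N.-1 - i)%N with
                 | Some k => c k | None => 0 end.

Definition rows_of {R : Type} (N m : nat) (Omega : {set 'I_N}) (A : 'M[R]_(N, m))
  : 'M[R]_(#|Omega|, m) :=
  \matrix_(k, j) A (enum_val k) j.

Definition coherence {R : numDomainType} (m N : nat) (A : 'M[R]_(m, N)) : R :=
  \big[Num.max/0]_(rho < N) \big[Num.max/0]_(lam < N | lam != rho)
     `| \sum_(k < m) A k rho * A k lam |.

(* Probability of an event under independent uniform (fair) coordinates. *)
Definition unif_prob {R : numFieldType} (T : finType) (E : pred T) : R :=
  #|[set x | E x]|%:R / #|T|%:R.

(* Main.v *)
Require Import Defs.
From HB Require Import structures.
From mathcomp Require Import all_boot all_order all_algebra.
From mathcomp Require Import reals exp.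
From mathcomp Require Import sequences.
From mathcomp Require Import lra zify ring.
Set Implicit Arguments. Unset Strict Implicit. Unset Printing Implicit Defensive.
Import Order.TTheory GRing.Theory Num.Theory.
Local Open Scope ring_scope.

Section NatPart.
Local Open Scope nat_scope.

Lemma modV N (a k : 'I_N) : (a + N - k) %% N = if (k <= a)%N then (a - k)%N else (a + N - k)%N.
Proof.
case: leqP => h.
  have -> : (a + N - k = (a - k) + N)%N by lia.
  by rewrite modnDr modn_small //; have := ltn_ord a; lia.
by rewrite modn_small //; have := ltn_ord a; lia.
Qed.

Lemma circ_peel N (r l : 'I_N) (Q : {set 'I_N}) (up : bool) :
  r != l -> Q != set0 -> (forall k, k \in Q -> (2 * ((r + N - k) %% N) < N)%N = up) ->
  exists2 j, j \in Q & forall k, k \in Q -> ((l + N - j) %% N != (r + N - k) %% N)%N.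
Proof.
move=> rl /set0Pn [j0 j0Q] hQ.
have rl' : (r : nat) <> l by move=> e; move/eqP: rl; apply; apply: ord_inj.
have hr := ltn_ord r; have hl := ltn_ord l.
case: (leqP (2 * ((l + N - r) %% N)) N) => hd.
  case: (@arg_maxnP _ j0 (mem Q) (fun j => (r + N - j) %% N)%N j0Q) => j jQ jmax.
  exists j => // k kQ.
  have hj := hQ j jQ; have hk := hQ k kQ; have hm : ((r + N - k) %% N <= (r + N - j) %% N)%N := jmax k kQ.
  have hjN := ltn_ord j; have hkN := ltn_ord k.
  move: hj hk hm hd; rewrite !modV; clear hQ jmax.
  case: up => [hj hk | /negbT hj /negbT hk] hm hd; move: hj hk hm hd;
  case: (leqP j r); case: (leqP j l); case: (leqP k r); case: (leqP r l) => ? ? ? ? hj hk hm hd;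
  apply/eqP; lia.
case: (@arg_minnP _ j0 (mem Q) (fun j => (r + N - j) %% N)%N j0Q) => j jQ jmin.
exists j => // k kQ.
have hj := hQ j jQ; have hk := hQ k kQ; have hm : ((r + N - j) %% N <= (r + N - k) %% N)%N := jmin k kQ.
have hjN := ltn_ord j; have hkN := ltn_ord k.
move: hj hk hm hd; rewrite !modV; clear hQ jmin.
case: up => [hj hk | /negbT hj /negbT hk] hm hd; move: hj hk hm hd;
case: (leqP j r); case: (leqP j l); case: (leqP k r); case: (leqP r l) => ? ? ? ? hj hk hm hd;
apply/eqP; lia.
Qed.

Lemma circ_inj N (l j k : 'I_N) : ((l + N - j) %% N = (l + N - k) %% N)%N -> j = k.
Proof.
rewrite !modV => h; apply: ord_inj; move: h.
have := ltn_ord l; have := ltn_ord j; have := ltn_ord k.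
case: (leqP j l); case: (leqP k l) => ? ? ? ? ? ; lia.
Qed.

Lemma circ_ne N (r l j : 'I_N) : r != l -> ((l + N - j) %% N != (r + N - j) %% N)%N.
Proof.
move=> rl; have rl' : (r : nat) <> l by move=> e; move/eqP: rl; apply; apply: ord_inj.
rewrite !modV; have := ltn_ord l; have := ltn_ord j; have := ltn_ord r.
case: (leqP j l); case: (leqP j r) => ? ? ? ? ?; apply/eqP; lia.
Qed.

Lemma toep_peel N (r l : 'I_N) (Q : {set 'I_N}) :
  r != l -> Q != set0 ->
  exists2 j, j \in Q & forall k, k \in Q -> (l + N.-1 - j != r + N.-1 - k)%N.
Proof.
move=> rl /set0Pn [j0 j0Q].
have rl' : (r : nat) <> l by move=> e; move/eqP: rl; apply; apply: ord_inj.
have hr := ltn_ord r; have hl := ltn_ord l.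
case: (ltnP r l) => hd.
  case: (@arg_minnP _ j0 (mem Q) (fun j => val j) j0Q) => j jQ jmin.
  exists j => // k kQ; have : ((j : nat) <= k)%N := jmin k kQ; have := ltn_ord j; have := ltn_ord k => ? ? ?; apply/eqP; lia.
case: (@arg_maxnP _ j0 (mem Q) (fun j => val j) j0Q) => j jQ jmax.
exists j => // k kQ; have : ((k : nat) <= j)%N := jmax k kQ; have := ltn_ord j; have := ltn_ord k => ? ? ?; apply/eqP; lia.
Qed.

End NatPart.

Section Gen.
Variable R : realType.
Variables (I J : finType).
Local Notation X := {ffun I -> bool}.

Definition sg (x : X) i : R := pm1 (x i).
Definition Ysum (P : {set J}) (u w : J -> I) (x : X) : R :=
  \sum_(j in P) sg x (u j) * sg x (w j).
Definition peel (P : {set J}) (u w : J -> I) :=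
  forall Q : {set J}, Q \subset P -> Q != set0 ->
   exists2 j, j \in Q & forall k, k \in Q -> (w j != u k) && ((k != j) ==> (w j != w k)).
Definition Ch (l : R) := (expR l + expR (- l)) / 2.

Definition flip (i0 : I) (x : X) : X := [ffun i => if i == i0 then ~~ x i else x i].
Lemma flipK i0 : involutive (flip i0).
Proof. move=> x; apply/ffunP=> i; rewrite !ffunE; case: eqP => //; by rewrite negbK. Qed.
Lemma sg_flip i0 x i : sg (flip i0 x) i = if i == i0 then - sg x i else sg x i.
Proof. rewrite /sg ffunE; case: eqP => // _; by case: (x i); rewrite /pm1 ?opprK. Qed.

Lemma sgE x i : sg x i = 1 \/ sg x i = -1.
Proof. rewrite /sg /pm1; case: (x i); auto. Qed.

Lemma peel_sub (P Q : {set J}) (u w : J -> I) : Q \subset P -> peel P u w -> peel Q u w.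
Proof. move=> QP hP Q' sQ' nQ'. apply: hP nQ'. exact: subset_trans QP. Qed.

Lemma ChN l : Ch (- l) = Ch l.
Proof. by rewrite /Ch opprK addrC. Qed.

Lemma mgf P u w l : peel P u w ->
  \sum_(x : X) expR (l * Ysum P u w x) = #|{: X}|%:R * Ch l ^+ #|P|.
Proof.
move: {2}#|P| (erefl #|P|) => k; elim: k P => [|k IH] P hk hP.
  have -> : P = set0 by apply/eqP; rewrite -cards_eq0 hk.
  rewrite cards0 expr0 mulr1.
  under eq_bigr do rewrite /Ysum big_set0 mulr0 expR0.
  by rewrite sumr_const.
have nP : P != set0 by rewrite -card_gt0 hk.
have [j jP hj] := hP P (subxx P) nP.
set P' := P :\ j.
have hk' : #|P'| = k by move: hk; rewrite (cardsD1 j) jP /=; case.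
have hP' : peel P' u w by apply: peel_sub hP; exact: subsetDl.
have Ye x : Ysum P u w x = sg x (u j) * sg x (w j) + Ysum P' u w x.
  by rewrite /Ysum (bigD1 j) //=; congr (_ + _); apply: eq_bigl => i; rewrite !inE andbC.
have Yf x : Ysum P' u w (flip (w j) x) = Ysum P' u w x.
  apply: eq_bigr => i; rewrite !inE => /andP[ij iP].
  have /andP[h1 h2] := hj i iP; rewrite ij /= in h2.
  rewrite !sg_flip eq_sym (negbTE h1) eq_sym (negbTE h2) //.
have af x : sg (flip (w j) x) (u j) * sg (flip (w j) x) (w j) = - (sg x (u j) * sg x (w j)).
  have /andP[h1 _] := hj j jP.
  by rewrite !sg_flip eqxx eq_sym (negbTE h1) mulrN.
set S := \sum_(x : X) expR (l * Ysum P u w x).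
have S2 : S = \sum_(x : X) expR (- l * (sg x (u j) * sg x (w j))) * expR (l * Ysum P' u w x).
  rewrite /S (reindex_inj (inv_inj (flipK (w j)))) /=.
  apply: eq_bigr => x _; rewrite Ye Yf af -expRD; congr expR; ring.
have S1 : S = \sum_(x : X) expR (l * (sg x (u j) * sg x (w j))) * expR (l * Ysum P' u w x).
  by apply: eq_bigr => x _; rewrite Ye -expRD mulrDr.
have : S + S = \sum_(x : X) (2 * Ch l) * expR (l * Ysum P' u w x).
  rewrite {1}S1 S2 -big_split /=; apply: eq_bigr => x _; rewrite -mulrDl; congr (_ * _).
  rewrite /Ch [2 * _]mulrC divfK ?pnatr_eq0 //.
  case: (sgE x (u j)) => ->; case: (sgE x (w j)) => ->;
   rewrite ?mul1r ?mulr1 ?mulrN ?mulNr ?opprK ?mulr1 ?mulN1r ?mulrN1 ?opprK //; by rewrite addrC.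
rewrite -big_distrr /= IH // => H.
have -> : S = Ch l * (#|{: X}|%:R * Ch l ^+ #|P'|).
  apply: (@mulfI _ 2); first by rewrite pnatr_eq0.
  transitivity (S + S); first by ring.
  by rewrite H; ring.
by rewrite hk exprS hk'; ring.
Qed.

Lemma tail P u w (l a : R) : peel P u w ->
  \sum_(x : X) (((a < l * Ysum P u w x)%R)%:R : R) <= #|{: X}|%:R * Ch l ^+ #|P| * expR (- a).
Proof.
move=> hP; rewrite -(mgf l hP) mulr_suml; apply: ler_sum => x _.
rewrite -expRD; case: ltP => h; last exact: expR_ge0.
by apply: ltW; rewrite expR_gt1; lra.
Qed.

Lemma Ch_le l : l ^+ 2 <= 2^-1 -> Ch l <= expR (2 * l ^+ 2).
Proof.
move=> hl.
apply: le_trans (expR_ge1Dx _).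
set A := expR l; set B := expR (- l).
have AB : A * B = 1 by rewrite /A /B expRxMexpNx_1.
have hA : 1 + l <= A by apply: expR_ge1Dx.
have hB : 1 - l <= B by apply: expR_ge1Dx.
have A0 : 0 < A by apply: expR_gt0.
have B0 : 0 < B by apply: expR_gt0.
have l1 : 1 - l ^+ 2 > 0 by lra.
have h1 : A * (1 - l) <= 1 by rewrite -AB; apply: ler_wpM2l; lra.
have h2 : B * (1 + l) <= 1 by rewrite -AB mulrC; apply: ler_wpM2r; lra.
have lp : 0 <= 1 + l by nra.
have lm : 0 <= 1 - l by nra.
have h3 : A * (1 - l ^+ 2) <= 1 + l.
  have -> : A * (1 - l ^+ 2) = (A * (1 - l)) * (1 + l) by ring.
  by rewrite -[leRHS]mul1r; apply: ler_wpM2r.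
have h4 : B * (1 - l ^+ 2) <= 1 - l.
  have -> : B * (1 - l ^+ 2) = (B * (1 + l)) * (1 - l) by ring.
  by rewrite -[leRHS]mul1r; apply: ler_wpM2r.
have h5a : (A + B) * (1 - l ^+ 2) <= 2 by rewrite mulrDl; lra.
have h5b : 0 <= l ^+ 2 * (1 - 2 * l ^+ 2) by apply: mulr_ge0; [exact: sqr_ge0 | lra].
have h5 : (A + B) * (1 - l ^+ 2) <= (2 + 4 * l ^+ 2) * (1 - l ^+ 2).
  apply: (le_trans h5a).
  have -> : (2 + 4 * l ^+ 2) * (1 - l ^+ 2) = 2 + 2 * (l ^+ 2 * (1 - 2 * l ^+ 2)) by ring.
  lra.
have h6 : A + B <= 2 + 4 * l ^+ 2 by rewrite -(ler_pM2r l1).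
rewrite /Ch -/A -/B; lra.
Qed.

Lemma cardX_gt0 : (0 < #|{: X}|)%N.
Proof. by apply/card_gt0P; exists [ffun=> true]. Qed.

Lemma sum_ind (E : pred X) :
  \sum_(x : X) ((E x)%:R : R) + \sum_(x : X) ((~~ E x)%:R : R) = #|{: X}|%:R.
Proof.
rewrite -big_split /=.
transitivity (\sum_(x : X) (1 : R)); last by rewrite sumr_const.
by apply: eq_bigr => x _; case: (E x); rewrite /= ?addr0 ?add0r.
Qed.

Lemma unif_bound (E : pred X) (eps : R) :
  \sum_(x : X) ((~~ E x)%:R : R) <= eps * #|{: X}|%:R -> 1 - eps <= unif_prob E.
Proof.
move=> h; rewrite /unif_prob.
have X0 : (0 : R) < #|{: X}|%:R by rewrite ltr0n cardX_gt0.
have -> : (#|[set x | E x]|%:R : R) = \sum_(x : X) ((E x)%:R : R).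
  rewrite -sumr_const big_mkcond /=; apply: eq_bigr => x _; rewrite inE.
  by case: (E x).
rewrite ler_pdivlMr // mulrBl mul1r.
have := sum_ind E; lra.
Qed.

Lemma Ysum_norm P u w x : `|Ysum P u w x| <= #|P|%:R.
Proof.
apply: le_trans (ler_norm_sum _ _ _) _.
rewrite -sumr_const; apply: ler_sum => j _.
by rewrite normrM; case: (sgE x (u j)) => ->; case: (sgE x (w j)) => ->;
  rewrite ?normrN normr1 mulr1.
Qed.

Lemma expR1_le4 : expR 1 <= 4 :> R.
Proof.
set h : R := 2^-1.
have eh : expR h * expR (- h) = 1 by apply: expRxMexpNx_1.
have hb : 1 - h <= expR (- h) by apply: expR_ge1Dx.
have ha : 0 < expR h by apply: expR_gt0.
have h2 : expR h <= 2.
  have : expR h * (1 - h) <= expR h * expR (- h) by apply: ler_wpM2l; [exact: ltW | exact: hb].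
  rewrite eh.
  rewrite /h; lra.
have -> : expR 1 = expR h * expR h by rewrite -expRD /h; congr expR; field.
have : expR h * expR h <= 2 * 2 by apply: ler_pM => //; exact: ltW.
lra.
Qed.

Lemma ind4 (p1 p2 p3 p4 : bool) : p1 || p2 || p3 || p4 ->
  (1 : R) <= p1%:R + p2%:R + p3%:R + p4%:R.
Proof.
case: p1; case: p2; case: p3; case: p4 => //= _;
  rewrite ?mulr1n ?mulr0n ?addr0 ?add0r //; lra.
Qed.

Lemma coh_le (m N : nat) (M : 'M[R]_(m, N)) (B : R) : 0 <= B ->
  (forall r l : 'I_N, r != l -> `|\sum_(k < m) M k r * M k l| <= B) -> coherence M <= B.
Proof.
move=> B0 h; rewrite /coherence; apply: (big_ind (fun v => v <= B)) => //.
  by move=> a b ha hb; rewrite ge_max ha hb.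
move=> r _; apply: (big_ind (fun v => v <= B)) => //.
  by move=> a b ha hb; rewrite ge_max ha hb.
by move=> l lr; apply: h; rewrite eq_sym.
Qed.

Definition Hyp (m N n : nat) (A : X -> 'M[R]_(m, N)) :=
  forall r l : 'I_N, r != l -> exists P1 : {set J}, exists u1 w1, exists P2 : {set J}, exists u2 w2,
     [/\ peel P1 u1 w1, peel P2 u2 w2, (#|P1| + #|P2| <= n)%N &
      forall x, \sum_(k < m) A x k r * A x k l = (n%:R)^-1 * (Ysum P1 u1 w1 x + Ysum P2 u2 w2 x)].

Lemma unif_one (E : pred X) (eps : R) : 0 < eps -> (forall x, E x) -> 1 - eps <= unif_prob E.
Proof.
move=> e0 h; apply: unif_bound.
rewrite big1 ?mulr_ge0 ?ler0n //; first exact: ltW.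
by move=> x _; rewrite h.
Qed.

Lemma assembly (m N n : nat) (eps : R) (A : X -> 'M[R]_(m, N)) :
  (n <= N)%N -> 0 < eps -> eps < 1 -> Hyp n A ->
  1 - eps <= unif_prob (T := X) (fun x => coherence (A x) <= 4 * ln (2 * N%:R ^+ 2 / eps) / Num.sqrt n%:R).
Proof.
move=> nN e0 e1 H.
set L := ln _. set s := Num.sqrt _. set B := 4 * L / s.
have L0 : 0 <= L.
  case: (posnP N) => [N0|N0].
    by rewrite /L ln0 // N0 mulr0n expr0n /= mulr0 mul0r.
  apply: ln_ge0; rewrite ler_pdivlMr // mul1r.
  have : (1 : R) <= N%:R by rewrite ler1n.
  nra.
have s0 : 0 <= s by apply: sqrtr_ge0.
have B0 : 0 <= B by rewrite /B; apply: divr_ge0 => //; apply: mulr_ge0.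
have triv : (forall x (r l : 'I_N), r != l -> `|\sum_(k < m) A x k r * A x k l| <= B) ->
    1 - eps <= unif_prob (T := X) (fun x => coherence (A x) <= B).
  by move=> h; apply: unif_one => // x; apply: coh_le => //; apply: h.
case: (leqP N 1) => [N1|N2].
  apply: triv => x r l rl; exfalso; move/negP: rl; apply.
  apply/eqP/ord_inj; move: (ltn_ord r) (ltn_ord l) N1; lia.
case: (posnP n) => [n0|npos].
  apply: triv => x r l rl; have [P1 [u1 [w1 [P2 [u2 [w2 [_ _ _ hx]]]]]]] := H r l rl.
  by rewrite hx n0 invr0 mul0r normr0.
have ss : s ^+ 2 = n%:R by rewrite /s sqr_sqrtr // ler0n.
have sp : 0 < s by rewrite /s sqrtr_gt0 ltr0n.
case: (leP 1 B) => [B1|B1].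
  apply: triv => x r l rl; have [P1 [u1 [w1 [P2 [u2 [w2 [_ _ hP hx]]]]]]] := H r l rl.
  apply: le_trans B1; rewrite hx normrM ger0_norm ?invr_ge0 ?ler0n //.
  rewrite ler_pdivrMl ?ltr0n // mulr1.
  apply: le_trans (ler_normD _ _) _.
  apply: le_trans (lerD (Ysum_norm _ _ _ _) (Ysum_norm _ _ _ _)) _.
  by rewrite -natrD ler_nat.
have Npos : (0 < N)%N by lia.
have q0 : 0 < 2 * N%:R ^+ 2 / eps.
  by apply: divr_gt0 => //; apply: mulr_gt0 => //; apply: exprn_gt0; rewrite ltr0n.
have eL : expR L = 2 * N%:R ^+ 2 / eps by rewrite /L lnK // posrE.
have N2r : (2 : R) <= N%:R by rewrite ler_nat.
have L1 : 1 < L.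
  rewrite -ltr_expR eL.
  apply: le_lt_trans (expR1_le4) _.
  rewrite ltr_pdivlMr //; nra.
have s4 : 4 < s.
  move: B1; rewrite /B ltr_pdivrMr // mul1r => h; lra.
have n16 : (16 < n)%N.
  rewrite -(ltr_nat R) -ss; nra.
have N16 : (16 < N)%N by apply: leq_trans n16 nN.
have Chb : forall (k : nat) (ll : R), (k <= n)%N -> ll ^+ 2 = s^-1 ^+ 2 -> Ch ll ^+ k <= expR 2.
  move=> k ll kn hl.
  have l2 : ll ^+ 2 <= 2^-1.
    rewrite hl exprVn ss lef_pV2 ?posrE ?ltr0n //.
    have n2r : (2:R) <= n%:R by rewrite ler_nat (leq_trans _ (ltnW n16)).
    exact: n2r.
  have C0 : 0 <= Ch ll by rewrite /Ch; apply: divr_ge0 => //; apply: addr_ge0; exact: expR_ge0.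
  apply: le_trans (lerXn2r k _ _ (Ch_le l2)) _; rewrite ?nnegrE ?expR_ge0 //.
  rewrite -expRM_natl ler_expR hl exprVn ss.
  rewrite mulrCA -[leRHS]mulr1; apply: ler_wpM2l => //.
  by rewrite ler_pdivrMr ?ltr0n // mul1r ler_nat.
set T := #|{: X}|%:R * expR 2 * expR (- (2 * L)).
have T0 : 0 <= T by rewrite /T; apply: mulr_ge0; [apply: mulr_ge0 => //; exact: expR_ge0 | exact: expR_ge0].
have pair : forall r l : 'I_N, \sum_(x : X) (((r != l) && (B < `|\sum_(k < m) A x k r * A x k l|))%:R : R)
     <= 4 * T.
  move=> r l; case: (eqVneq r l) => [_|rl].
    by rewrite big1 //; apply: mulr_ge0.
  have [P1 [u1 [w1 [P2 [u2 [w2 [hp1 hp2 hP hx]]]]]]] := H r l rl.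
  have t : forall P u w (ll : R), peel P u w -> (#|P| <= n)%N -> ll ^+2 = s^-1^+2 ->
       \sum_(x : X) (((2 * L < ll * Ysum P u w x)%R)%:R : R) <= T.
    move=> P u w ll hpl hn hl; apply: le_trans (tail ll (2 * L) hpl) _.
    rewrite /T; apply: ler_wpM2r; first exact: expR_ge0.
    apply: ler_wpM2l; [exact: ler0n | exact: Chb].
  have hl1 : s^-1 ^+ 2 = s^-1 ^+ 2 by [].
  have hl2 : (- s^-1) ^+ 2 = s^-1 ^+ 2 by rewrite sqrrN.
  have n1 : (#|P1| <= n)%N by apply: leq_trans hP; apply: leq_addr.
  have n2 : (#|P2| <= n)%N by apply: leq_trans hP; apply: leq_addl.
  have a1 := t _ _ _ _ hp1 n1 hl1; have a2 := t _ _ _ _ hp1 n1 hl2.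
  have a3 := t _ _ _ _ hp2 n2 hl1; have a4 := t _ _ _ _ hp2 n2 hl2.
  apply: le_trans (_ : _ <= \sum_(x : X) (((2 * L < s^-1 * Ysum P1 u1 w1 x)%R)%:R
     + ((2 * L < - s^-1 * Ysum P1 u1 w1 x)%R)%:R + ((2 * L < s^-1 * Ysum P2 u2 w2 x)%R)%:R
     + ((2 * L < - s^-1 * Ysum P2 u2 w2 x)%R)%:R : R)) _; last first.
    rewrite !big_split /=; lra.
  apply: ler_sum => x _; rewrite /=.
  case: ltP => hb; last by rewrite !addr_ge0 ?ler0n.
  rewrite hx in hb.
  set a := s^-1 * Ysum P1 u1 w1 x in hb *; set b := s^-1 * Ysum P2 u2 w2 x in hb *.
  have e : (n%:R)^-1 * (Ysum P1 u1 w1 x + Ysum P2 u2 w2 x) = s^-1 * (a + b).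
    rewrite /a /b -ss; field; by rewrite gt_eqF.
  rewrite e normrM ger0_norm ?invr_ge0 // /B mulrC ltr_pM2l ?invr_gt0 // in hb.
  have hab := ler_normD a b.
  have key : (2 * L < a) || (2 * L < - a) || (2 * L < b) || (2 * L < - b).
    rewrite -!ltr_normr; case: (ltP (2 * L) `|a|) => //= ha.
    rewrite -ltr_normr; lra.
  rewrite !mulNr -/a -/b.
  by have := ind4 key; rewrite /= mulr1n.
have tot : \sum_(x : X) ((~~ (coherence (A x) <= B))%:R : R) <= (4 * T) *+ N *+ N.
  apply: le_trans (_ : _ <= \sum_(x : X) \sum_(r < N) \sum_(l < N)
     (((r != l) && (B < `|\sum_(k < m) A x k r * A x k l|))%:R : R)) _; last first.
    apply: (@le_trans _ _ (\sum_(r < N) \sum_(l < N) (4 * T))); last first.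
      by rewrite !sumr_const !card_ord.
    rewrite exchange_big /=; apply: ler_sum => r _.
    rewrite exchange_big /=; apply: ler_sum => l _.
    exact: pair.
  apply: ler_sum => x _.
  case: (boolP (coherence (A x) <= B)) => hg /=.
    by apply: sumr_ge0 => r _; apply: sumr_ge0 => l _; exact: ler0n.
  case: (pickP (fun p : 'I_N * 'I_N => (p.1 != p.2) && (B < `|\sum_(k < m) A x k p.1 * A x k p.2|)))
    => [[r l] /= /andP[rl hb] | hn]; last first.
    exfalso; move/negP: hg; apply; apply: coh_le => // r l rl.
    by have := hn (r, l); rewrite /= rl /= => /negbT; rewrite -leNgt.
  rewrite (bigD1 r) //= (bigD1 l) //= rl hb /=.
  set S1 := \sum_(i < N | i != l) _. set S2 := \sum_(i < N | i != r) _.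
  have h1 : 0 <= S1 by apply: sumr_ge0 => *; exact: ler0n.
  have h2 : 0 <= S2 by apply: sumr_ge0 => *; apply: sumr_ge0 => *; exact: ler0n.
  rewrite mulr1n; lra.
apply: unif_bound; apply: (le_trans tot).
have e2 : expR 2 <= 16 :> R.
  have -> : (2 : R) = 2%:R * 1 by rewrite mulr1.
  rewrite expRM_natl; have := expR1_le4; have := expR_gt0 (1 : R); nra.
have eL2 : expR (- (2 * L)) = (eps / (2 * N%:R ^+ 2)) ^+ 2.
  by rewrite expRN expRM_natl eL -exprVn invf_div.
have mN : forall z : R, z *+ N *+ N = z * (N%:R * N%:R).
  by move=> z; rewrite -mulrnA -natrM mulr_natr.
rewrite mN /T eL2.
set q : R := N%:R. set Xc : R := #|{: X}|%:R. set e := expR 2.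
have qp : 16 < q by rewrite /q ltr_nat.
have X0 : 0 < Xc by rewrite /Xc ltr0n cardX_gt0.
have e0' : 0 <= e by apply: expR_ge0.
have -> : 4 * (Xc * e * (eps / (2 * q ^+ 2)) ^+ 2) * (q * q) = (Xc * eps / q ^+ 2) * (e * eps).
  field; rewrite gt_eqF //; lra.
have : e * eps <= q ^+ 2.
  have h1 : e * eps <= 16 * 1 by apply: ler_pM => //; lra.
  have h2 : 16 * 16 <= q * q by apply: ler_pM => //; lra.
  rewrite expr2; lra.
have c0 : 0 <= Xc * eps / q ^+ 2.
  apply: divr_ge0; [apply: mulr_ge0; lra | exact: sqr_ge0].
move=> h; apply: le_trans (ler_wpM2l c0 h) _.
rewrite divfK; [lra | rewrite sqrf_eq0 gt_eqF //; lra].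
Qed.

End Gen.


Section Spec.
Variable R : realType.

Lemma circE N (f : 'I_N -> R) (i j : 'I_N) :
  circulant f i j = f (insubd j ((j + N - i) %% N)%N).
Proof.
rewrite /circulant mxE; case: insubP => [k hk ek | hn].
  by congr f; apply: val_inj; rewrite val_insubd ek /= hk.
exfalso; move/negP: hn; apply; rewrite ltn_pmod //.
exact: (leq_ltn_trans (leq0n _) (ltn_ord i)).
Qed.

Lemma toepE N (c : 'I_(2 * N - 1) -> R) (x0 : 'I_(2 * N - 1)) (i j : 'I_N) :
  toeplitz c i j = c (insubd x0 (j + N.-1 - i)%N).
Proof.
rewrite /toeplitz mxE; case: insubP => [k hk ek | hn].
  by congr c; apply: val_inj; rewrite val_insubd ek /= hk.
exfalso; move/negP: hn; apply; have := ltn_ord i; have := ltn_ord j; lia.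
Qed.

Lemma rows_sum N (Omega : {set 'I_N}) (M : 'M[R]_(N, N)) (a : R) (r l : 'I_N) :
  \sum_(k < #|Omega|) (a *: rows_of Omega M) k r * (a *: rows_of Omega M) k l
   = a ^+ 2 * \sum_(w in Omega) M w r * M w l.
Proof.
rewrite [in RHS]big_enum_val big_distrr /=.
by apply: eq_bigr => k _; rewrite !mxE; ring.
Qed.

End Spec.

Section Final.
Variable R : realType.

Lemma vI n (x0 : 'I_n) v : (v < n)%N -> val (insubd x0 v) = v.
Proof. by move=> h; rewrite val_insubd h. Qed.

Lemma hyp_circ N n (Omega : {set 'I_N}) : #|Omega| = n ->
  Hyp 'I_N n (fun b : {ffun 'I_N -> bool} =>
     (Num.sqrt (n%:R : R))^-1 *: rows_of Omega (circulant (fun k => pm1 (b k) : R))).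
Proof.
move=> hn r l rl.
have N0 : (0 < N)%N by exact: (leq_ltn_trans (leq0n _) (ltn_ord r)).
pose u (o : 'I_N) := insubd r ((r + N - o) %% N)%N.
pose w (o : 'I_N) := insubd l ((l + N - o) %% N)%N.
have uE o : val (u o) = ((r + N - o) %% N)%N by rewrite vI // ltn_pmod.
have wE o : val (w o) = ((l + N - o) %% N)%N by rewrite vI // ltn_pmod.
pose C := [set o : 'I_N | (2 * ((r + N - o) %% N) < N)%N].
have pl : forall up (P : {set 'I_N}), (forall k, k \in P -> (2 * ((r + N - k) %% N) < N)%N = up) ->
    peel P u w.
  move=> up P hP Q sQ nQ.
  have [j jQ hj] := circ_peel (up := up) rl nQ (fun k kQ => hP k (subsetP sQ k kQ)).
  exists j => // k kQ; apply/andP; split.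
    by apply/eqP => /(congr1 val); rewrite uE wE; apply/eqP; exact: hj.
  apply/implyP => kj; apply/eqP => /(congr1 val); rewrite !wE => /circ_inj e.
  by move: kj; rewrite e eqxx.
exists (Omega :&: C), u, w, (Omega :\: C), u, w; split.
- by apply: (pl true) => k; rewrite !inE => /andP[_ ->].
- by apply: (pl false) => k; rewrite !inE => /andP[/negbTE -> _].
- by rewrite cardsID hn.
move=> x; rewrite rows_sum exprVn sqr_sqrtr ?ler0n // (big_setID C) /=.
rewrite /Ysum; congr (_ * (_ + _)); apply: eq_bigr => o _; by rewrite !circE.
Qed.

Lemma hyp_toep N n (Omega : {set 'I_N}) : #|Omega| = n ->
  Hyp 'I_N n (fun c : {ffun 'I_(2 * N - 1) -> bool} =>
     (Num.sqrt (n%:R : R))^-1 *: rows_of Omega (toeplitz (fun k => pm1 (c k) : R))).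
Proof.
move=> hn r l rl.
have hN : (0 < 2 * N - 1)%N by have := ltn_ord r; lia.
pose x0 : 'I_(2 * N - 1) := Ordinal hN.
pose u (o : 'I_N) := insubd x0 (r + N.-1 - o)%N.
pose w (o : 'I_N) := insubd x0 (l + N.-1 - o)%N.
have uE o : val (u o) = (r + N.-1 - o)%N.
  by rewrite vI //; have := ltn_ord r; have := ltn_ord o; lia.
have wE o : val (w o) = (l + N.-1 - o)%N.
  by rewrite vI //; have := ltn_ord l; have := ltn_ord o; lia.
exists Omega, u, w, set0, u, w; split.
- move=> Q sQ nQ.
  have [j jQ hj] := toep_peel rl nQ.
  exists j => // k kQ; apply/andP; split.
    by apply/eqP => /(congr1 val); rewrite uE wE; apply/eqP; exact: hj.
  apply/implyP => kj; apply/eqP => /(congr1 val); rewrite !wE => e.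
  move/eqP: kj; apply; apply: ord_inj; move: e; have := ltn_ord l; have := ltn_ord j;
    have := ltn_ord k; lia.
- by move=> Q; rewrite subset0 => /eqP ->; rewrite eqxx.
- by rewrite cards0 addn0 hn.
move=> x; rewrite rows_sum exprVn sqr_sqrtr ?ler0n // /Ysum big_set0 addr0.
by congr (_ * _); apply: eq_bigr => o _; rewrite !(toepE _ x0).
Qed.

End Final.


Unset Implicit Arguments.

Theorem proposition3 (R : realType) (N n : nat) (Omega : {set 'I_N}) (eps : R) :
  #|Omega| = n -> 0 < eps -> eps < 1 ->
  1 - eps <= unif_prob (T := {ffun 'I_N -> bool}) (fun b =>
     coherence ((Num.sqrt (n%:R : R))^-1 *:
                rows_of Omega (circulant (fun k => pm1 (b k) : R)))
     <= 4 * ln (2 * (N%:R) ^+ 2 / eps) / Num.sqrt (n%:R))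
  /\
  1 - eps <= unif_prob (T := {ffun 'I_(2 * N - 1) -> bool}) (fun c =>
     coherence ((Num.sqrt (n%:R : R))^-1 *:
                rows_of Omega (toeplitz (fun k => pm1 (c k) : R)))
     <= 4 * ln (2 * (N%:R) ^+ 2 / eps) / Num.sqrt (n%:R)).
Proof.
move=> hn e0 e1.
have nN : (n <= N)%N by rewrite -hn -[X in (_ <= X)%N]card_ord max_card.
split.
  exact: (assembly nN e0 e1 (hyp_circ R hn)).
exact: (assembly nN e0 e1 (hyp_toep R hn)).
Qed.
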